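(* Let $A$ be an $n\times n$ ASM and let $p=\sigma_-(A)$. Then there is a sequence of $n\times n$ ASMs $A^{(p)},A^{(p-1)},\ldots,A^{(0)}$ such that (i) $A^{(p)}=A$; (ii) $A^{(0)}$ is a permutation matrix; (iii) $\sigma_-(A^{(s)})=s$ for $s=0,1,\ldots,p$; and (iv) $h(A^{(p)})\preceq^* h(A^{(p-1)})\preceq^*\cdots\preceq^* h(A^{(0)})$.
   Context: An $n\times n$ alternating sign matrix (ASM) is an $n\times n$ matrix with entries in $\{0,1,-1\}$ such that in every row and column the nonzeros alternate in sign, beginning and ending with $+1$. $\sigma_-(B)$ denotes the number of entries equal to $-1$ in $B$. For an $n\times n$ matrix $B$, $h(B)=B^Tz_n$ where $z_n=(n,n-1,\ldots,1)^T$. For vectors $x,y\in\mathbb R^n$ (not necessarily sorted), $x\preceq^* y$ means $\sum_{j=1}^p x_j\le\sum_{j=1}^p y_j$ for all $p\le n$, with equality for $p=n$. *)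

(* Defs.v *)
From mathcomp Require Import all_boot all_order all_fingroup all_algebra.
Set Implicit Arguments. Unset Strict Implicit. Unset Printing Implicit Defensive.
Import Order.TTheory GRing.Theory Num.Theory.
Local Open Scope ring_scope.

(* A sequence of integers "alternates in sign, beginning and ending with +1":
   its nonzero entries form the list [:: 1; -1; 1; ...; -1; 1] (odd length, >= 1). *)
Definition alt_sign_seq (s : seq int) : bool :=
  let t := [seq x <- s | x != 0] in
  odd (size t) && all (fun k => nth 0 t k == (-1) ^+ k) (iota 0 (size t)).

Definition is_ASM (n : nat) (A : 'M[int]_n) : bool :=
  [forall i, forall j, (A i j == 0) || (A i j == 1) || (A i j == -1)] &&
  [forall i, alt_sign_seq [seq A i j | j <- enum 'I_n]] &&
  [forall j, alt_sign_seq [seq A i j | i <- enum 'I_n]].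

Definition sigma_minus (n : nat) (A : 'M[int]_n) : nat :=
  #|[set ij : 'I_n * 'I_n | A ij.1 ij.2 == -1]|.

Definition is_perm_matrix (n : nat) (A : 'M[int]_n) : bool :=
  [exists s : 'S_n, A == perm_mx s].

(* z_n = (n, n-1, ..., 1)^T, i.e. (z_n)_i = n - i for 0-based i *)
Definition zvec (n : nat) : 'cV[int]_n := \col_(i < n) (n - i)%:R.

Definition hvec (n : nat) (B : 'M[int]_n) : 'cV[int]_n := B^T *m zvec n.

Definition maj_star (n : nat) (x y : 'cV[int]_n) : Prop :=
  (forall p : nat, (p <= n)%N ->
     \sum_(j < n | (j < p)%N) x j 0 <= \sum_(j < n | (j < p)%N) y j 0) /\
  \sum_(j < n) x j 0 = \sum_(j < n) y j 0.

(* Main.v *)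
Require Import Defs.
From mathcomp Require Import all_boot all_order all_fingroup all_algebra.
From mathcomp Require Import zify ring lra.
Import Order.TTheory GRing.Theory Num.Theory.
Set Implicit Arguments. Unset Strict Implicit. Unset Printing Implicit Defensive.
Local Open Scope ring_scope.


Fixpoint altb (b : bool) (s : seq int) : bool :=
  match s with
  | [::] => b
  | x :: s' => if x == 0 then altb b s'
               else if b then (x == -1) && altb false s'
               else (x == 1) && altb true s'
  end.

Definition altc (e : nat) (t : seq int) : bool :=
  odd (size t + e) && all (fun k => nth 0 t k == (-1) ^+ (k + e)) (iota 0 (size t)).

Lemma altc_cons e x t : altc e (x :: t) = (x == (-1) ^+ e) && altc e.+1 t.
Proof.
rewrite /altc /= -add1n iotaDl all_map /= add0n addnS /=.
case: (x == (-1) ^+ e); rewrite ?andbF //=; congr (_ && _).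
by apply: eq_all => k /=; rewrite add1n addSnnS.
Qed.

Lemma altc_SS e t : altc e.+2 t = altc e t.
Proof.
rewrite /altc !addnS /= negbK; congr (_ && _); apply: eq_all => k /=.
by rewrite !addnS !exprS !mulN1r opprK.
Qed.

Lemma altb_altc b s : altb b s = altc b [seq x <- s | x != 0].
Proof.
elim: s b => [|x s IH] b; first by rewrite /altc /= andbT; case: b.
rewrite /=; case: eqP => [->|_] //=.
rewrite altc_cons; case: b => /=.
  by rewrite expr1 altc_SS IH.
by rewrite expr0 IH.
Qed.

Lemma alt_sign_altb s : alt_sign_seq s = altb false s.
Proof. by rewrite altb_altc /alt_sign_seq /altc /=; rewrite addn0; congr (_ && _);
  apply: eq_all => k; rewrite addn0. Qed.

Definition ok (v : int) := (v == 0) || (v == 1).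

Lemma take_consS (x : int) s k : take k.+1 (x :: s) = x :: take k s.
Proof. by []. Qed.

Lemma altbP b s : altb b s <->
  (forall k, ok ((if b then 1 else 0) + \sum_(x <- take k s) x)) /\
  (if b then 1 else 0) + \sum_(x <- s) x = 1.
Proof.
elim: s b => [|x s IH] b.
  rewrite /= big_nil; split.
    by move=> ->; split => // k; rewrite big_nil.
  by case: b => // -[_]; rewrite addr0.
rewrite /=; split.
  case: eqP => [-> /IH [H1 H2]|/eqP xn0].
    split; last by rewrite big_cons add0r.
    by case=> [|k]; [rewrite big_nil; case: b {H1 H2} | rewrite take_consS big_cons add0r].
  case: b => /andP [/eqP -> /IH [H1 H2]]; (split; [case=> [|k]|]);
    rewrite ?take_consS ?big_nil ?big_cons //.
  - by rewrite addrA subrr.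
  - by rewrite addrA subrr.
  - by rewrite add0r.
  - by rewrite add0r.
move=> [H1 H2]; rewrite big_cons in H2.
have H1' : forall k, ok ((if b then 1 else 0) + x + \sum_(y <- take k s) y).
  by move=> k; have := H1 k.+1; rewrite take_consS big_cons addrA.
have Hx := H1 1%N; rewrite take_consS take0 big_cons big_nil addr0 in Hx.
case: eqP => [x0|/eqP xn0].
  by apply/IH; rewrite x0 addr0 in H1' *; split => //; rewrite addrA x0 addr0 in H2.
case: b H1 Hx H1' H2 => _ Hx H1' H2.
  have Ex : x = -1 by move: Hx xn0; rewrite /ok; lia.
  rewrite Ex in H1' H2 *.
  rewrite eqxx /=; apply/IH; rewrite /= add0r; split.
    by move=> k; have := H1' k; rewrite subrr add0r.
  by rewrite addrA subrr add0r in H2.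
have Ex : x = 1 by move: Hx xn0; rewrite /ok; lia.
rewrite Ex in H1' H2 *.
rewrite eqxx /=; apply/IH; split.
  by move=> k; have := H1' k; rewrite add0r.
by rewrite add0r in H2.
Qed.


Definition ps n (F : 'I_n -> int) (k : nat) := \sum_(j < n | (j < k)%N) F j.

Lemma sum_take_enum n (F : 'I_n -> int) k :
  \sum_(x <- take k [seq F j | j <- enum 'I_n]) x = ps F k.
Proof.
rewrite /ps; elim: n F k => [|n IH] F k.
  by rewrite enum_ord0 /= big_nil big_ord0.
case: k => [|k].
  by rewrite take0 big_nil big_mkcond big1 // => j _; rewrite ltn0.
rewrite enum_ordSl map_cons take_consS big_cons.
rewrite -map_comp IH [RHS]big_mkcond big_ord_recl /=.
congr (_ + _); rewrite [LHS]big_mkcond; apply: eq_bigr => i _.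
by rewrite /bump /= add1n ltnS.
Qed.

Lemma alt_ordP n (F : 'I_n -> int) :
  alt_sign_seq [seq F j | j <- enum 'I_n] <->
  (forall k, ok (ps F k)) /\ \sum_(j < n) F j = 1.
Proof.
rewrite alt_sign_altb; split.
  move/altbP => [H1 H2]; split.
    by move=> k; have := H1 k; rewrite add0r sum_take_enum.
  rewrite add0r -(take_oversize (n:=n) (s:=[seq F j | j <- enum 'I_n])) in H2;
    last by rewrite size_map size_enum_ord.
  by rewrite sum_take_enum /ps in H2; rewrite -H2; apply: eq_bigl => j; rewrite ltn_ord.
move=> [H1 H2]; apply/altbP; split.
  by move=> k; rewrite add0r sum_take_enum.
rewrite add0r -(take_oversize (n:=n) (s:=[seq F j | j <- enum 'I_n]));
  last by rewrite size_map size_enum_ord.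
by rewrite sum_take_enum /ps -H2; apply: eq_bigl => j; rewrite ltn_ord.
Qed.

Definition ent (v : int) := (v == 0) || (v == 1) || (v == -1).

Lemma ASMP n (A : 'M[int]_n) : is_ASM A <->
  [/\ forall i j, ent (A i j),
      forall i, (forall k, ok (ps (fun j => A i j) k)) /\ \sum_(j < n) A i j = 1 &
      forall j, (forall k, ok (ps (fun i => A i j) k)) /\ \sum_(i < n) A i j = 1].
Proof.
rewrite /is_ASM; split.
  case/andP => [/andP [/forallP H1 /forallP H2] /forallP H3]; split.
  - by move=> i j; have /forallP := H1 i; apply.
  - by move=> i; apply/alt_ordP; apply: H2.
  - by move=> j; apply/(alt_ordP (fun i => A i j)); apply: H3.
case=> H1 H2 H3; apply/andP; split; [apply/andP; split|].
- by apply/forallP => i; apply/forallP => j; apply: H1.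
- by apply/forallP => i; apply/alt_ordP; apply: H2.
- by apply/forallP => j; apply/(alt_ordP (fun i => A i j)); apply: H3.
Qed.


Lemma ps0 n (F : 'I_n -> int) : ps F 0 = 0.
Proof. by rewrite /ps big_mkcond big1 // => j _; rewrite ltn0. Qed.

Lemma psS n (F : 'I_n -> int) (j : 'I_n) : ps F j.+1 = ps F j + F j.
Proof.
rewrite /ps (bigD1 j) //= addrC; congr (_ + _); apply: eq_bigl => i.
by rewrite ltnS ltn_neqAle andbC.
Qed.

Lemma ps_full n (F : 'I_n -> int) k : (n <= k)%N -> ps F k = \sum_(j < n) F j.
Proof. by move=> H; apply: eq_bigl => j; rewrite (leq_trans (ltn_ord j) H). Qed.

Lemma psD n (F G : 'I_n -> int) k : ps (fun j => F j + G j) k = ps F k + ps G k.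
Proof. by rewrite /ps big_split. Qed.

Lemma psB n (F G : 'I_n -> int) k : ps (fun j => F j - G j) k = ps F k - ps G k.
Proof. by rewrite /ps sumrB. Qed.

Lemma ps_delta n (c : bool) (b : 'I_n) k :
  ps (fun j => (c && (j == b))%:R) k = (c && (b < k)%N)%:R :> int.
Proof.
rewrite /ps big_mkcond (bigD1 b) //= eqxx andbT big1 ?addr0.
  by case: c; case: (b < k)%N.
by move=> j /negbTE ->; rewrite andbF; case: (j < k)%N.
Qed.

Lemma ps_mono n (F : 'I_n -> int) m k : (forall i : 'I_n, (i < m)%N -> 0 <= F i) ->
  (k <= m)%N -> 0 <= ps F k <= ps F m.
Proof.
move=> H km; apply/andP; split.
  apply: sumr_ge0 => i ik; apply: H; exact: leq_trans ik km.
rewrite /ps [X in _ <= X](bigID (fun i : 'I_n => (i < k)%N)) /=.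
have -> : \sum_(i < n | (i < m)%N && (i < k)%N) F i = \sum_(i < n | (i < k)%N) F i.
  apply: eq_bigl => i; case ik: (i < k)%N; rewrite ?andbF ?andbT //.
  exact: leq_trans ik km.
rewrite lerDl; apply: sumr_ge0 => i /andP [im _]; exact: H.
Qed.

Lemma last_zero (f : nat -> int) c : (forall k, ok (f k)) -> f 0%N = 0 -> f c = 1 ->
  exists2 c1, (c1 < c)%N & f c1 = 0 /\ forall k, (c1 < k <= c)%N -> f k = 1.
Proof.
move=> Hok f0; elim: c => [|c IH] fc; first by rewrite f0 in fc.
have := Hok c; rewrite /ok; case/orP => /eqP fc'.
  exists c => //; split => // k /andP [ck kc].
  by have -> : k = c.+1 by lia.
have [c1 c1c [H1 H2]] := IH fc'.
exists c1; first by lia.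
split => // k /andP [c1k kc].
have [->|kc'] : k = c.+1 \/ (k <= c)%N by lia.
  by [].
by apply: H2; apply/andP; split.
Qed.


Definition ee n (a b i j : 'I_n) : int := ((i == a) && (j == b))%:R.

Definition move_mx n (A : 'M[int]_n) (r1 c1 r c : 'I_n) : 'M[int]_n :=
  \matrix_(i, j) (A i j + ee r1 c1 i j - ee r1 c i j - ee r c1 i j + ee r c i j).

Lemma ps_row_ee n (a b i : 'I_n) k :
  ps (fun j => ee a b i j) k = ((i == a) && (b < k)%N)%:R.
Proof. exact: ps_delta. Qed.

Lemma ps_col_ee n (a b j : 'I_n) k :
  ps (fun i => ee a b i j) k = ((j == b) && (a < k)%N)%:R.
Proof.
rewrite -ps_delta; apply: eq_bigr => i _; by rewrite /ee andbC.
Qed.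

Lemma ps_row_move n (A : 'M[int]_n) r1 c1 r c i k :
  ps (fun j => move_mx A r1 c1 r c i j) k =
  ps (fun j => A i j) k + ((i == r1) && (c1 < k)%N)%:R - ((i == r1) && (c < k)%N)%:R
   - ((i == r) && (c1 < k)%N)%:R + ((i == r) && (c < k)%N)%:R.
Proof.
rewrite -!ps_row_ee -!psD -!psB -psD; apply: eq_bigr => j _; by rewrite mxE.
Qed.

Lemma ps_col_move n (A : 'M[int]_n) r1 c1 r c j k :
  ps (fun i => move_mx A r1 c1 r c i j) k =
  ps (fun i => A i j) k + ((j == c1) && (r1 < k)%N)%:R - ((j == c) && (r1 < k)%N)%:R
   - ((j == c1) && (r < k)%N)%:R + ((j == c) && (r < k)%N)%:R.
Proof.
rewrite -!ps_col_ee -!psD -!psB -psD; apply: eq_bigr => i _; by rewrite mxE.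
Qed.




Lemma move_ASM n (A : 'M[int]_n) (r1 r c1 c : 'I_n) :
  is_ASM A -> (r1 < r)%N -> (c1 < c)%N ->
  A r1 c1 = 0 -> A r1 c = 1 -> A r c1 = 1 -> A r c = -1 ->
  (forall k, ps (fun j => A r1 j) k = (c < k)%N%:R) ->
  (forall k, (c1 < k <= c)%N -> ps (fun j => A r j) k = 1) ->
  (forall k, (k <= r)%N -> ps (fun i => A i c1) k = 0) ->
  (forall k, (r1 < k <= r)%N -> ps (fun i => A i c) k = 1) ->
  is_ASM (move_mx A r1 c1 r c).
Proof.
move=> /ASMP [He Hr Hc] r1r c1c A11 A12 A21 A22 Row1 Row2 Col1 Col2.
have rr1 : (r == r1) = false by apply/negbTE; rewrite neq_ltn r1r orbT.
have cc1 : (c == c1) = false by apply/negbTE; rewrite neq_ltn c1c orbT.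
have r1r' : (r1 == r) = false by rewrite eq_sym.
have c1c' : (c1 == c) = false by rewrite eq_sym.
have okR : forall i k, ok (ps (fun j => move_mx A r1 c1 r c i j) k).
  move=> i k; rewrite ps_row_move.
  have [->|ir1] := eqVneq i r1.
    rewrite r1r' Row1 /=.
    by case: (ltnP c1 k); case: (ltnP c k) => /=; rewrite /ok; lia.
  rewrite /=.
  have [->|ir] := eqVneq i r.
    rewrite /=; have := (Hr r).1 k.
    case: (ltnP c1 k) => h1; case: (ltnP c k) => h2 /=; rewrite ?subr0 ?addr0.
    - by rewrite subrK.
    - by rewrite Row2 ?h1 //; rewrite /ok; lia.
    - lia.
    - by [].
  by rewrite !andFb /=; have := (Hr i).1 k; rewrite /ok; lia.
have okC : forall j k, ok (ps (fun i => move_mx A r1 c1 r c i j) k).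
  move=> j k; rewrite ps_col_move.
  have [->|jc1] := eqVneq j c1.
    rewrite c1c' /=; have := (Hc c1).1 k.
    case: (leqP k r) => kr; [rewrite Col1 // |];
      case: (ltnP r1 k) => h1; case: (ltnP r k) => h2 /=; rewrite /ok; lia.
  have [->|jc] := eqVneq j c.
    rewrite /=; have := (Hc c).1 k.
    case: (ltnP r1 k) => h1; case: (ltnP r k) => h2 /=;
      first [rewrite Col2; last by apply/andP | idtac]; rewrite /ok; lia.
  by rewrite !andFb /=; have := (Hc j).1 k; rewrite /ok; lia.
apply/ASMP; split.
- move=> i j; rewrite mxE /ee.
  have [->|ir1] := eqVneq i r1.
    rewrite r1r' /=.
    have [->|jc1] := eqVneq j c1; first by rewrite c1c' A11.
    have [->|jc] := eqVneq j c; first by rewrite A12 /=; rewrite /ent; lia.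
    by rewrite ?andbF /=; have := He r1 j; rewrite /ent; lia.
  have [->|ir] := eqVneq i r.
    rewrite /=.
    have [->|jc1] := eqVneq j c1; first by rewrite c1c' A21.
    have [->|jc] := eqVneq j c; first by rewrite A22 /=; rewrite /ent; lia.
    by rewrite ?andbF /=; have := He r j; rewrite /ent; lia.
  by rewrite ?andFb /=; have := He i j; rewrite /ent; lia.
- move=> i; split => //; rewrite -(ps_full _ (leqnn n)) ps_row_move ps_full //.
  by rewrite (ltn_ord c1) (ltn_ord c) !andbT (Hr i).2; case: (i == r1); case: (i == r);
    rewrite /=; lia.
- move=> j; split => //; rewrite -(ps_full _ (leqnn n)) ps_col_move ps_full //.
  by rewrite (ltn_ord r1) (ltn_ord r) !andbT (Hc j).2; case: (j == c1); case: (j == c);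
    rewrite /=; lia.
Qed.


Lemma move_sigma n (A : 'M[int]_n) (r1 r c1 c : 'I_n) :
  (r1 < r)%N -> (c1 < c)%N ->
  A r1 c1 = 0 -> A r1 c = 1 -> A r c1 = 1 -> A r c = -1 ->
  sigma_minus (move_mx A r1 c1 r c) = (sigma_minus A).-1.
Proof.
move=> r1r c1c A11 A12 A21 A22.
have rr1 : (r1 == r) = false by apply/negbTE; rewrite neq_ltn r1r.
have cc1 : (c1 == c) = false by apply/negbTE; rewrite neq_ltn c1c.
have Hin : (r, c) \in [set ij | A ij.1 ij.2 == -1] by rewrite inE /= A22.
rewrite /sigma_minus (cardsD1 (r, c) [set ij | A ij.1 ij.2 == -1]) Hin add1n /=.
apply: eq_card => -[i j]; rewrite !inE /= mxE /ee xpair_eqE.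
have [->|ir1] := eqVneq i r1.
  rewrite rr1 /=.
  have [->|jc1] := eqVneq j c1; first by rewrite cc1 A11.
  have [->|jc] := eqVneq j c; first by rewrite A12.
  by rewrite /=; case: (A r1 j == -1) / eqP => H; lia.
have [->|ir] := eqVneq i r.
  rewrite /=.
  have [->|jc1] := eqVneq j c1; first by rewrite cc1 A21.
  have [->|jc] := eqVneq j c; first by rewrite A22.
  by rewrite /=; case: (A r j == -1) / eqP => H; lia.
by rewrite /=; case: (A i j == -1) / eqP => H; lia.
Qed.


Lemma hvecE n (B : 'M[int]_n) j : hvec B j 0 = \sum_i B i j * (n - i)%:R.
Proof. by rewrite /hvec /zvec !mxE; apply: eq_bigr => i _; rewrite !mxE. Qed.

Lemma sum_ee n (a b j : 'I_n) (w : 'I_n -> int) :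
  \sum_i ee a b i j * w i = (j == b)%:R * w a.
Proof.
rewrite (bigD1 a) //= big1 ?addr0; first by rewrite /ee eqxx.
by move=> i /negbTE ia; rewrite /ee ia mul0r.
Qed.

Lemma hvec_move n (A : 'M[int]_n) (r1 c1 r c j : 'I_n) :
  hvec (move_mx A r1 c1 r c) j 0 = hvec A j 0 +
    ((j == c1)%:R - (j == c)%:R) * ((n - r1)%:R - (n - r)%:R).
Proof.
rewrite !hvecE.
set w := fun i : 'I_n => (n - i)%:R : int.
have -> : \sum_i move_mx A r1 c1 r c i j * (n - i)%:R =
   \sum_i A i j * w i + \sum_i ee r1 c1 i j * w i - \sum_i ee r1 c i j * w i
   - \sum_i ee r c1 i j * w i + \sum_i ee r c i j * w i.
  rewrite -big_split -sumrB -sumrB -big_split /=; apply: eq_bigr => i _; rewrite mxE /w; ring.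
rewrite !sum_ee /w; ring.
Qed.

Lemma sum_ind n (P : pred 'I_n) (b : 'I_n) :
  \sum_(j | P j) (j == b)%:R = (P b)%:R :> int.
Proof.
rewrite big_mkcond (bigD1 b) //= eqxx big1 ?addr0; first by case: (P b).
by move=> j /negbTE ->; case: (P j).
Qed.

Lemma sum_pred_move n (A : 'M[int]_n) (r1 c1 r c : 'I_n) (P : pred 'I_n) :
  \sum_(j | P j) hvec (move_mx A r1 c1 r c) j 0 = \sum_(j | P j) hvec A j 0 +
    ((P c1)%:R - (P c)%:R) * ((n - r1)%:R - (n - r)%:R).
Proof.
under eq_bigr do rewrite hvec_move.
by rewrite big_split /= -big_distrl /= sumrB !sum_ind.
Qed.

Lemma move_maj n (A : 'M[int]_n) (r1 r c1 c : 'I_n) :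
  (r1 < r)%N -> (c1 < c)%N ->
  maj_star (hvec A) (hvec (move_mx A r1 c1 r c)).
Proof.
move=> r1r c1c; split.
  move=> p _; rewrite (sum_pred_move A r1 c1 r c (fun j : 'I_n => (j < p)%N)) lerDl.
  apply: mulr_ge0.
    rewrite subr_ge0; case: (ltnP c p) => /= h; last by case: (c1 < p)%N.
    by rewrite (ltn_trans c1c h).
  by rewrite subr_ge0 ler_nat leq_sub2l // ltnW.
by rewrite (sum_pred_move A r1 c1 r c xpredT) /= subrr mul0r addr0.
Qed.


Lemma step n (A : 'M[int]_n) : is_ASM A -> (0 < sigma_minus A)%N ->
  exists A', [/\ is_ASM A', sigma_minus A' = (sigma_minus A).-1 &
                 maj_star (hvec A) (hvec A')].
Proof.
move=> HA sp; have := HA; move/ASMP => [He Hr Hc].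
have [ij0 Hij0] : exists ij : 'I_n * 'I_n, A ij.1 ij.2 == -1.
  by move: sp; rewrite /sigma_minus card_gt0 => /set0Pn [x]; rewrite inE; exists x.
case: (@arg_minnP _ ij0 (fun ij : 'I_n * 'I_n => A ij.1 ij.2 == -1) (fun ij : 'I_n * 'I_n => val ij.1) Hij0) => -[r c] /= /eqP Arc Hmin.
have Hpos : forall i j : 'I_n, (i < r)%N -> 0 <= A i j.
  move=> i j ir; have := He i j; rewrite /ent; case: (A i j =P -1) => [E|NE].
    by have := Hmin (i, j) (introT eqP E); rewrite /=; lia.
  by move: NE; lia.
have fc_r : ps (fun i => A i c) r = 1.
  have := (Hc c).1 r.+1; rewrite psS Arc; have := (Hc c).1 r; rewrite /ok; lia.
have [r1n r1r [H10 H11]] := last_zero (Hc c).1 (ps0 _) fc_r.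
have r1n_lt : (r1n < n)%N by have := ltn_ord r; lia.
pose r1 := Ordinal r1n_lt.
have r1r' : (r1 < r)%N by [].
have A12 : A r1 c = 1.
  have := H11 r1n.+1; rewrite (psS (fun i => A i c) r1) /= H10 add0r; apply.
  by apply/andP; split.
have fr_c : ps (fun j => A r j) c = 1.
  have := (Hr r).1 c.+1; rewrite psS Arc; have := (Hr r).1 c; rewrite /ok; lia.
have [c1n c1c [H20 H21]] := last_zero (Hr r).1 (ps0 _) fr_c.
have c1n_lt : (c1n < n)%N by have := ltn_ord c; lia.
pose c1 := Ordinal c1n_lt.
have c1c' : (c1 < c)%N by [].
have A21 : A r c1 = 1.
  have := H21 c1n.+1; rewrite (psS (fun j => A r j) c1) /= H20 add0r; apply.
  by apply/andP; split.
have Row1e : forall j, A r1 j = (true && (j == c))%:R.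
  have Hs := (Hr r1).2; rewrite (bigD1 c) //= A12 in Hs.
  have Hs0 : \sum_(j < n | j != c) A r1 j = 0 by apply: (@addrI _ 1); rewrite addr0.
  move=> j; have [->|jc] := eqVneq j c; first by rewrite A12.
  by rewrite (psumr_eq0P (fun j _ => Hpos r1 j r1r') Hs0 jc).
have Row1 : forall k, ps (fun j => A r1 j) k = (c < k)%N%:R.
  move=> k; rewrite -(ps_delta true c k); apply: eq_bigr => j _; exact: Row1e.
have A11 : A r1 c1 = 0.
  by rewrite Row1e /=; have -> : (c1 == c) = false by apply/negbTE; rewrite neq_ltn c1c'.
have Col1 : forall k, (k <= r)%N -> ps (fun i => A i c1) k = 0.
  have Hr0 : ps (fun i => A i c1) r = 0.
    have := (Hc c1).1 r.+1; rewrite psS A21; have := (Hc c1).1 r; rewrite /ok; lia.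
  move=> k kr; have := @ps_mono n (fun i => A i c1) r k (fun i ir => Hpos i c1 ir) kr.
  by rewrite Hr0; lia.
exists (move_mx A r1 c1 r c); split.
- by apply: move_ASM.
- exact: move_sigma.
- exact: move_maj.
Qed.


Lemma unit_vec n (F : 'I_n -> int) a : (forall j, 0 <= F j) -> \sum_j F j = 1 ->
  F a = 1 -> forall j, F j = (j == a)%:R.
Proof.
move=> Hp Hs Fa; rewrite (bigD1 a) //= Fa in Hs.
have Hs0 : \sum_(j < n | j != a) F j = 0 by apply: (@addrI _ 1); rewrite addr0.
move=> j; have [->|ja] := eqVneq j a; first by rewrite Fa.
by rewrite (psumr_eq0P (fun j _ => Hp j) Hs0 ja).
Qed.

Lemma perm_of_ASM n (A : 'M[int]_n) : is_ASM A -> sigma_minus A = 0%N ->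
  is_perm_matrix A.
Proof.
move=> /ASMP [He Hr Hc] s0.
have Hpos : forall i j, 0 <= A i j.
  move=> i j; have := He i j; rewrite /ent; case: (A i j =P -1) => [E|NE].
    have : (i, j) \in [set ij : 'I_n * 'I_n | A ij.1 ij.2 == -1] by rewrite inE /= E.
    by move: s0; rewrite /sigma_minus => /eqP; rewrite cards_eq0 => /eqP ->; rewrite inE.
  by move: NE; lia.
have Hex : forall i, exists j, A i j == 1.
  move=> i; have [j /andP [_ Hj]] : exists j, true && (0 < A i j).
    by apply: psumr_neq0P => [j _|]; [exact: Hpos | rewrite (Hr i).2].
  by exists j; have := He i j; move: Hj; rewrite /ent; lia.
pose f i := odflt i [pick j | A i j == 1].
have Hf : forall i, A i (f i) = 1.
  move=> i; rewrite /f; case: pickP => [j /eqP //|H].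
  by have [j Hj] := Hex i; rewrite H in Hj.
have finj : injective f.
  move=> i i' E.
  have := @unit_vec n (fun k => A k (f i)) i (fun k => Hpos k _) (Hc (f i)).2 (Hf i) i'.
  by rewrite {1}E Hf => /eqP; case: (i' == i) / eqP.
apply/existsP; exists (perm finj); apply/eqP/matrixP => i j.
rewrite perm_mxEsub !mxE permE.
rewrite (@unit_vec n (fun k => A i k) (f i) (fun k => Hpos i k) (Hr i).2 (Hf i) j).
by rewrite eq_sym.
Qed.


Lemma main_aux n p : forall (A : 'M[int]_n), is_ASM A -> sigma_minus A = p ->
  exists B : nat -> 'M[int]_n,
    [/\ (forall s : nat, (s <= p)%N -> is_ASM (B s)),
        B p = A,
        is_perm_matrix (B 0%N),
        (forall s : nat, (s <= p)%N -> sigma_minus (B s) = s) &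
        (forall s : nat, (s < p)%N -> maj_star (hvec (B s.+1)) (hvec (B s)))].
Proof.
elim: p => [|p IH] A HA sA.
  exists (fun _ => A); split => //.
  - exact: perm_of_ASM.
  - by move=> s; rewrite leqn0 => /eqP ->.
have [A' [HA' sA' mj]] : exists A', [/\ is_ASM A', sigma_minus A' = (sigma_minus A).-1 & maj_star (hvec A) (hvec A')] by apply: step; rewrite ?sA.
rewrite sA /= in sA'.
have [B' [H1 H2 H3 H4 H5]] := IH A' HA' sA'.
exists (fun s => if s == p.+1 then A else B' s); split.
- move=> s sp; case: eqP => // ne; apply: H1; lia.
- by rewrite eqxx.
- exact: H3.
- move=> s sp; case: eqP => [->|ne] //; apply: H4; lia.
- move=> s sp; rewrite (_ : (s == p.+1) = false); last by apply/eqP; lia.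
  case: eqP => [[E]|ne].
    by rewrite E H2.
  apply: H5; lia.
Qed.

Unset Implicit Arguments.

Theorem mainTheorem9 (n : nat) (A : 'M[int]_n) :
  is_ASM A ->
  let p := sigma_minus A in
  exists B : nat -> 'M[int]_n,
    [/\ (forall s : nat, (s <= p)%N -> is_ASM (B s)),
        B p = A,
        is_perm_matrix (B 0%N),
        (forall s : nat, (s <= p)%N -> sigma_minus (B s) = s) &
        (forall s : nat, (s < p)%N -> maj_star (hvec (B s.+1)) (hvec (B s)))].
Proof.
move=> HA; exact: (main_aux HA erefl).
Qed.
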